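(* Let $\mathfrak v$ be an exact colinked chain with finite cosupport. Then the subset $\mathbb{LP}(\mathfrak v)^*\subseteq\mathbb{LP}(\mathfrak v)$ parameterizing exact subrepresentations is open and dense in $\mathbb{LP}(\mathfrak v)$.
   Context: Let $k$ be a field. $\mathcal Z$ is the quiver with vertex set $\mathbb Z$ and arrows $\alpha^i\colon i\to i+1$, $\alpha_i\colon i+1\to i$ ($i\in\mathbb Z$). A representation $\mathfrak{v}=(V_i,v_i,v^i)$ has finite-dimensional $k$-spaces $V_i$ and maps $v^i\colon V_i\to V_{i+1}$, $v_i\colon V_{i+1}\to V_i$; compositions $v^i_j$ are $v^{j-1}\circ\cdots\circ v^i$ ($j>i$), $v_j\circ\cdots\circ v_{i-1}$ ($j<i$), identity ($j=i$). A colinked chain satisfies $v_iv^i=0$, $v^iv_i=0$ and $\mathrm{Im}(v_i)+\mathrm{Im}(v^{i-1})=V_i$ for all $i$. A representation is exact if $\ker(v^i)=\mathrm{Im}(v_i)$ and $\ker(v_i)=\mathrm{Im}(v^i)$ for all $i$. A cosupport is $H\subseteq\mathbb Z$ such that for each $i$ there is $j\in H$ with $v^i_j$ injective. $\mathbb{LP}(\mathfrak{v})$ is the set of subrepresentations $\mathfrak w=(W_i)$ (with the restricted maps) with every $W_i\subseteq V_i$ one-dimensional, $v^i(W_i)\subseteq W_{i+1}$, $v_i(W_{i+1})\subseteq W_i$, given the scheme structure of the closed subscheme of $\prod_{i\in H}\mathbb P(V_i)$, for any finite interval cosupport $H$, defined by $v^i_j(x_i)\wedge x_j=0$ for $i,j\in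 H$. *)

(* Defs.v *)
From HB Require Import structures.
From mathcomp Require Import all_boot all_order all_algebra.
Set Implicit Arguments. Unset Strict Implicit. Unset Printing Implicit Defensive.
Import Order.TTheory GRing.Theory Num.Theory.
Local Open Scope ring_scope.

(* A representation of the quiver Z over a field k, with row-vector convention:
   V_i = 'rV[k]_(d i), v^i(x) = x *m up i, v_i(y) = y *m down i. *)

Section Rep.
Variables (k : fieldType) (d : int -> nat).
Variables (up : forall i : int, 'M[k]_(d i, d (i + 1)))
          (down : forall i : int, 'M[k]_(d (i + 1), d i)).

Inductive upR (i : int) (x : 'rV[k]_(d i)) : forall j : int, 'rV[k]_(d j) -> Prop :=
| upR0 : upR x x
| upRS j (y : 'rV[k]_(d j)) : upR x y -> upR x (y *m up j).

Inductive downR (i : int) (x : 'rV[k]_(d i)) : forall j : int, 'rV[k]_(d j) -> Prop :=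
| downR0 : downR x x
| downRS j (y : 'rV[k]_(d (j + 1))) : downR x y -> downR x (y *m down j).

(* graph of v^i_j (identity for j = i) *)
Definition compR (i : int) (x : 'rV[k]_(d i)) (j : int) (y : 'rV[k]_(d j)) : Prop :=
  upR x y \/ downR x y.

Definition comp_injective (i j : int) : Prop :=
  forall (x x' : 'rV[k]_(d i)) (y : 'rV[k]_(d j)), compR x y -> compR x' y -> x = x'.

(* colinked chain; the spanning condition Im(v_i) + Im(v^{i-1}) = V_i is
   written at index i+1 (i ranging over all of Z) to avoid type casts. *)
Definition colinked : Prop :=
  forall i : int,
    up i *m down i = 0 /\ down i *m up i = 0 /\
    (1%:M <= down (i + 1)%R + up i)%MS.

Definition exact_rep : Prop :=
  forall i : int, (kermx (up i) == down i)%MS /\ (kermx (down i) == up i)%MS.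

Definition cosupport (H : pred int) : Prop :=
  forall i : int, exists j : int, H j /\ comp_injective i j.

Variables (K : fieldType) (f : {rmorphism k -> K}).
Definition upK (i : int) : 'M[K]_(d i, d (i + 1)) := map_mx f (up i).
Definition downK (i : int) : 'M[K]_(d (i + 1), d i) := map_mx f (down i).

Definition fam := forall i : int, 'rV[K]_(d i).

(* K-points of LP(v): families of lines W_i = <w i> in V_i (x) K forming a
   subrepresentation *)
Definition lp_point (w : fam) : Prop :=
  forall i : int, w i != 0 /\ (w i *m upK i <= w (i + 1)%R)%MS /\
                  (w (i + 1)%R *m downK i <= w i)%MS.

(* the subrepresentation (W_i) with restricted maps is exact:
   ker(w^i) = Im(w_i) in W_i and ker(w_i) = Im(w^i) in W_{i+1} *)
Definition exact_sub (w : fam) : Prop :=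
  forall i : int,
    ((w i :&: kermx (upK i)) == w (i + 1)%R *m downK i)%MS /\
    ((w (i + 1)%R :&: kermx (downK i)) == w i *m upK i)%MS.

(* Zariski topology on prod_{i in H} P(V_i (x) K), H = [a, a + n] *)
Variables (a : int) (n : nat).
Definition inH (i : int) : bool := (a <= i) && (i <= a + n%:Z).

Inductive polyfun : (fam -> K) -> Prop :=
| pf_const (c : K) : polyfun (fun _ => c)
| pf_coord (i : int) (r : 'I_(d i)) : inH i -> polyfun (fun x => x i 0 r)
| pf_add p q : polyfun p -> polyfun q -> polyfun (fun x => p x + q x)
| pf_mul p q : polyfun p -> polyfun q -> polyfun (fun x => p x * q x).

Definition multihomogeneous (p : fam -> K) : Prop :=
  exists e : int -> nat, forall (lam : int -> K) (x : fam),
    (forall i, lam i != 0) ->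
    p (fun i => lam i *: x i) =
      (\prod_(t < n.+1) lam (a + (t : nat)%:Z) ^+ e (a + (t : nat)%:Z)) * p x.

(* Zariski closed subsets of the product of projective spaces, as sets of
   representative families *)
Definition zclosed (Z : fam -> Prop) : Prop :=
  exists S : (fam -> K) -> Prop,
    (forall p, S p -> polyfun p /\ multihomogeneous p) /\
    (forall x, Z x <-> (forall p, S p -> p x = 0)).

Definition LPstar_open : Prop :=
  exists Z, zclosed Z /\ forall w, lp_point w -> (exact_sub w <-> ~ Z w).

Definition LPstar_dense : Prop :=
  forall Z, zclosed Z ->
    (forall w, lp_point w -> exact_sub w -> Z w) ->
    forall w, lp_point w -> Z w.

End Rep.

(* Main.v *)
Require Import Defs.
From HB Require Import structures.
From mathcomp Require Import all_boot all_order all_algebra.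
From mathcomp Require Import zify.
From Stdlib Require Import ClassicalEpsilon Classical FunctionalExtensionality.
Import Order.TTheory GRing.Theory Num.Theory.
Local Open Scope ring_scope.
Set Implicit Arguments. Unset Strict Implicit. Unset Printing Implicit Defensive.

Section Tr.
Variables (K : fieldType) (d : int -> nat).
Definition tr (j j' : int) (e : j = j') (x : 'rV[K]_(d j)) : 'rV[K]_(d j') :=
  let: erefl in _ = l := e return 'rV[K]_(d l) in x.
Lemma tr_id j (e : j = j) x : tr e x = x.
Proof. by rewrite (eq_irrelevance e erefl). Qed.
Lemma tr_irr j j' (e e' : j = j') x : tr e x = tr e' x.
Proof. by rewrite (eq_irrelevance e e'). Qed.
Lemma tr_tr j1 j2 j3 (e1 : j1 = j2) (e2 : j2 = j3) x :
  tr e2 (tr e1 x) = tr (etrans e1 e2) x.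
Proof. by case: j3 / e2; case: j2 / e1. Qed.
Lemma tr0 j j' (e : j = j') : tr e 0 = 0.
Proof. by case: j' / e. Qed.

Lemma fam_back (i : int) (P : forall j : int, 'rV[K]_(d (j+1)) -> 'rV[K]_(d j) -> Prop)
  (x0 : 'rV[K]_(d i)) : (forall j z, exists x, P j z x) ->
  exists g : fam d K, g i = x0 /\ forall j, j < i -> P j (g (j+1)) (g j).
Proof.
move=> HP.
pose step j z := proj1_sig (constructive_indefinite_description _ (HP j z)).
have stepP j z : P j z (step j z) by exact: proj2_sig.
have e0 : i = i - (0%N)%:Z by rewrite subr0.
have eS N : i - N%:Z = (i - N.+1%:Z) + 1.
  by rewrite -[N.+1]addn1 PoszD opprD addrA subrK.
pose h := fix h (N : nat) : 'rV[K]_(d (i - N%:Z)) :=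
  match N with 0%N => tr e0 x0 | N'.+1 => step _ (tr (eS N') (h N')) end.
pose g (j : int) : 'rV[K]_(d j) :=
  match @eqP _ (i - (`|i - j|%N)%:Z) j with ReflectT e => tr e (h _) | ReflectF _ => 0 end.
have L N j (e : i - N%:Z = j) : g j = tr e (h N).
  rewrite /g; case: eqP => [e'|ne].
    have eN : `|i - j|%N = N by rewrite -e opprB addrC subrK absz_nat.
    move: e'; rewrite eN => e'; exact: tr_irr.
  by exfalso; apply: ne; rewrite -e opprB addrC subrK absz_nat.
exists g; split.
  by rewrite (L 0%N i (esym e0)) tr_tr tr_id.
move=> j ltji.
have [N eN] : exists N : nat, i - N.+1%:Z = j.
  exists (`|i - j|%N.-1); rewrite -[_.-1.+1]/(`|i - j|%N.-1.+1) prednK.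
    lia.
  lia.
have eN1 : i - N%:Z = j + 1 by rewrite -eN -eS.
rewrite (L _ _ eN1) (L _ _ eN) /=.
suff -> : forall j1 j' (e : j' = j1) z, tr e (step j' z) = step j1 (tr (congr1 (fun t => t + 1) e) z).
  by rewrite tr_tr (tr_irr _ eN1); apply: stepP.
by move=> j1 j' e z; case: j1 / e.
Qed.
End Tr.

Section Lines.
Variable F : fieldType.
Lemma line_eq n1 (x y : 'rV[F]_n1) : x != 0 -> y != 0 -> (x <= y)%MS -> (y <= x)%MS.
Proof. by move=> nx ny sxy; have [_ <-] := mxrank_leqif_sup sxy; rewrite !rank_rV nx ny. Qed.

Lemma line_scal n1 (x y : 'rV[F]_n1) : (x <= y)%MS -> exists c, x = c *: y.
Proof. by case/submxP => D ->; exists (D 0 0); rewrite {1}[D]mx11_scalar mul_scalar_mx. Qed.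

Lemma cap_out n1 m1 (x : 'rV[F]_n1) (Y : 'M[F]_(m1, n1)) : ~~ (x <= Y)%MS ->
  ((x :&: Y)%MS == (0 : 'M_(1, n1)))%MS.
Proof.
move=> nxY; apply/andP; split; last exact: sub0mx.
suff /eqP -> : (x :&: Y)%MS == 0 by exact: sub0mx.
rewrite -mxrank_eq0.
have [le eq] := mxrank_leqif_sup (capmxSl x Y).
have rx := rank_leq_row x.
have : (\rank (x :&: Y)%MS == \rank x) = false.
  by rewrite eq; apply: contraNF nxY => /submx_trans; apply; exact: capmxSr.
move: le rx; lia.
Qed.

Lemma link_gen n1 n2 (x : 'rV[F]_n1) (y : 'rV[F]_n2) (A : 'M_(n1, n2)) (B : 'M_(n2, n1)) :
  A *m B = 0 -> y != 0 -> x *m A != 0 -> (x *m A <= y)%MS ->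
  ((x :&: kermx A) == y *m B)%MS /\ ((y :&: kermx B) == x *m A)%MS.
Proof.
move=> AB ny nxA sxy.
have yB : y *m B = 0.
  have /line_scal [c ->] := line_eq nxA ny sxy.
  by rewrite -scalemxAl -mulmxA AB mulmx0 scaler0.
split.
  by rewrite yB; apply: cap_out; rewrite sub_kermx.
have /capmx_idPl e1 : (y <= kermx B)%MS by apply/sub_kermxP.
apply/eqmxP; apply: eqmx_trans e1 _; apply/eqmxP.
by rewrite sxy line_eq.
Qed.
End Lines.

Section Main.
Variables (k : fieldType) (d : int -> nat).
Variables (up : forall i : int, 'M[k]_(d i, d (i + 1)))
          (down : forall i : int, 'M[k]_(d (i + 1), d i)).
Hypothesis Hcol : colinked up down.
Hypothesis Hex : exact_rep up down.
Variables (K : fieldType) (f : {rmorphism k -> K}).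
Local Notation U i := (upK up f i).
Local Notation D i := (downK down f i).

Lemma UD0 i : U i *m D i = 0.
Proof. by rewrite /upK /downK -map_mxM (Hcol i).1 map_mx0. Qed.
Lemma DU0 i : D i *m U i = 0.
Proof. by rewrite /upK /downK -map_mxM (Hcol i).2.1 map_mx0. Qed.
Lemma spanK i : (1%:M <= D (i + 1) + U i)%MS.
Proof.
by rewrite /upK /downK -(map_mx1 f) -map_addsmx map_submx (Hcol i).2.2.
Qed.
Lemma kerDK i : (kermx (D i) <= U i)%MS.
Proof.
by rewrite /upK /downK -map_kermx map_submx; case/andP: (Hex i).2.
Qed.

Definition Q (l : int) (x : 'rV[K]_(d l)) : Prop :=
  forall m (e : m + 1 = l), tr (esym e) x *m D m = 0.

Lemma Q0 l : Q (0 : 'rV[K]_(d l)).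
Proof. by move=> m e; rewrite tr0 mul0mx. Qed.

Lemma QS l (x : 'rV[K]_(d (l + 1))) : Q x -> x *m D l = 0.
Proof. by move=> /(_ l erefl). Qed.

Lemma lift l (z : 'rV[K]_(d (l+1))) : z *m D l = 0 ->
  exists x : 'rV[K]_(d l), x *m U l = z /\ Q x.
Proof.
have e0 : (l - 1) + 1 = l by rewrite subrK.
move: (l - 1) e0 => m0 e0; move: z; case: l / e0 => z zD.
have: (z <= U (m0+1))%MS by apply: submx_trans (kerDK _); apply/sub_kermxP.
case/submxP => y zE.
have /sub_addsmxP [[a b] /= eab] : (y <= D (m0 + 1) + U m0)%MS.
  by apply: submx_trans (spanK m0); exact: submx1.
exists (b *m U m0); split.
  by rewrite zE eab mulmxDl -!mulmxA DU0 mulmx0 add0r.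
move=> m e; have em : m0 = m by apply: (addIr 1); rewrite e.
by case: m / em e => e; rewrite tr_id -mulmxA UD0 mulmx0.
Qed.

Lemma upR_chain l (x : 'rV[k]_(d l)) (m : nat) j (e : l + 1 + m%:Z = j) :
  exists y : 'rV[k]_(d j), upR up x y /\ (x *m up l = 0 -> y = 0) /\ (x = 0 -> y = 0).
Proof.
elim: m j e => [|m IH] j e.
  have e' : l + 1 = j by rewrite -e addr0.
  case: j / e' e => _; exists (x *m up l); split; first by apply: upRS; apply: upR0.
  by split => // ->; rewrite mul0mx.
have e' : l + 1 + m%:Z + 1 = j by rewrite -e; lia.
have [y' [R' [I1 I2]]] := IH _ erefl.
case: j / e' e => _; exists (y' *m up (l + 1 + m%:Z)); split; first exact: upRS.
by split => [/I1 -> | /I2 ->]; rewrite mul0mx.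
Qed.

Lemma downR_chain l (x : 'rV[k]_(d (l + 1))) (m : nat) j (e : j + m%:Z = l) :
  exists y : 'rV[k]_(d j), downR down x y /\ (x *m down l = 0 -> y = 0) /\ (x = 0 -> y = 0).
Proof.
elim: m j e => [|m IH] j e.
  have e' : j = l by rewrite -e addr0.
  case: l / e' x e => x _; exists (x *m down j); split; first by apply: downRS; apply: downR0.
  by split => // ->; rewrite mul0mx.
have e1 : j + 1 + m%:Z = l by rewrite -e; lia.
have [y' [R' [I1 I2]]] := IH (j + 1) e1.
exists (y' *m down j); split; first exact: downRS.
by split => [/I1 -> | /I2 ->]; rewrite mul0mx.
Qed.

Lemma inj_rowfree m1 n1 (A : 'M[k]_(m1, n1)) :
  (forall x : 'rV[k]_m1, x *m A = 0 -> x = 0) -> row_free A.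
Proof.
move=> H; rewrite -kermx_eq0; apply/eqP/row_matrixP => r.
by rewrite row0; apply: H; rewrite -row_mul mulmx_ker row0.
Qed.

Lemma rowfreeK m1 n1 (A : 'M[k]_(m1, n1)) : row_free A ->
  forall x : 'rV[K]_m1, x *m map_mx f A = 0 -> x = 0.
Proof.
rewrite -(row_free_map f) => /row_free_inj inj x xA.
by apply: inj; rewrite /= xA mul0mx.
Qed.

Variables (a : int) (n : nat).
Hypothesis Hcs : cosupport up down (inH a n).

Lemma U_inj l : l < a -> forall x : 'rV[K]_(d l), x *m U l = 0 -> x = 0.
Proof.
move=> la; apply: rowfreeK; apply: inj_rowfree => x xu.
have [j [/andP [aj _] ci]] := Hcs l.
have [m em] : exists m : nat, l + 1 + m%:Z = j by exists (absz (j - l - 1)%R); lia.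
have [y [Ry [Y1 _]]] := upR_chain x em.
have [y' [Ry' [_ Y2]]] := upR_chain (0 : 'rV[k]_(d l)) em.
apply: (ci x 0 y); first by left.
by rewrite (Y1 xu) -(Y2 erefl); left.
Qed.

Lemma D_inj l : a + n%:Z <= l -> forall x : 'rV[K]_(d (l + 1)), x *m D l = 0 -> x = 0.
Proof.
move=> la; apply: rowfreeK; apply: inj_rowfree => x xu.
have [j [/andP [_ ja] ci]] := Hcs (l + 1).
have [m em] : exists m : nat, j + m%:Z = l by exists (absz (l - j)%R); lia.
have [y [Ry [Y1 _]]] := downR_chain x em.
have [y' [Ry' [_ Y2]]] := downR_chain (0 : 'rV[k]_(d (l + 1))) em.
apply: (ci x 0 y); first by right.
by rewrite (Y1 xu) -(Y2 erefl); right.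
Qed.

Definition defect (w : fam d K) (i : int) : bool :=
  (w i *m U i == 0) && (w (i + 1) *m D i == 0).

Lemma exact_nodef w : lp_point up down f w -> (forall i, ~~ defect w i) ->
  exact_sub up down f w.
Proof.
move=> lp nd i; have [nw [s1 s2]] := lp i; have [nw1 _] := lp (i + 1).
case: (eqVneq (w i *m U i) 0) => [wu|wu].
  have wd : w (i + 1) *m D i != 0 by move: (nd i); rewrite /defect wu eqxx.
  by have [h1 h2] := link_gen (DU0 i) nw wd s2; split.
by have [h1 h2] := link_gen (UD0 i) nw1 wu s1; split.
Qed.

Lemma exact_def w : lp_point up down f w -> exact_sub up down f w ->
  forall i, ~~ defect w i.
Proof.
move=> lp ex i; apply/negP => /andP [/eqP wu /eqP wd].
have [h1 _] := ex i; rewrite wd in h1.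
have /capmx_idPl e : (w i <= kermx (U i))%MS by apply/sub_kermxP.
case/andP: h1; rewrite e => /submx0null w0 _.
by have [] := lp i; rewrite w0 eqxx.
Qed.

Lemma defect_in w i : lp_point up down f w -> defect w i -> a <= i /\ i < a + n%:Z.
Proof.
move=> lp /andP [/eqP wu /eqP wd].
have [nw _] := lp i; have [nw1 _] := lp (i + 1).
split.
  rewrite leNgt; apply/negP => ia.
  by move: nw; rewrite (U_inj ia wu) eqxx.
rewrite ltNge; apply/negP => ia.
by move: nw1; rewrite (D_inj ia wd) eqxx.
Qed.

Local Notation fm := (fam d K).

Lemma polyfun_ext (p q : fm -> K) : (forall x, p x = q x) -> polyfun a n p -> polyfun a n q.
Proof. by move=> e; have -> : p = q by apply: functional_extensionality. Qed.

Lemma polyfun_sum N (F : 'I_N -> fm -> K) : (forall r, polyfun a n (F r)) ->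
  polyfun a n (fun x => \sum_(r < N) F r x).
Proof.
elim: N F => [|N IH] F HF.
  by apply: (polyfun_ext (p := fun _ => 0)) => [x|]; rewrite ?big_ord0 //; apply: pf_const.
apply: (polyfun_ext (p := fun x => \sum_(r < N) F (widen_ord (leqnSn N) r) x + F ord_max x)).
  by move=> x; rewrite big_ord_recr.
by apply: pf_add => //; apply: IH.
Qed.

Lemma polyfun_coord l m1 (M : 'M[K]_(d l, m1)) c : inH a n l ->
  polyfun a n (fun x : fm => (x l *m M) 0 c).
Proof.
move=> hl; apply: (polyfun_ext (p := fun x : fm => \sum_(r < d l) x l 0 r * M r c)).
  by move=> x; rewrite mxE.
by apply: polyfun_sum => r; apply: pf_mul; [apply: pf_coord | apply: pf_const].
Qed.

Lemma prod_ind (lam : int -> K) l (t0 : nat) : (t0 < n.+1)%N -> l = a + t0%:Z ->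
  \prod_(t < n.+1) lam (a + (t : nat)%:Z) ^+ (a + (t : nat)%:Z == l) = lam l.
Proof.
move=> ht ->; rewrite (bigD1 (Ordinal ht)) //= eqxx expr1 big1 ?mulr1 // => t tne.
suff -> : (a + (t : nat)%:Z == a + t0%:Z) = false by rewrite expr0.
apply/negP => /eqP /addrI [] => e; move: tne; rewrite -val_eqE /= e eqxx //.
Qed.

Lemma mh_coord l m1 (M : 'M[K]_(d l, m1)) c : inH a n l ->
  multihomogeneous a n (fun x : fm => (x l *m M) 0 c).
Proof.
move=> /andP [al la].
have [t0 et] : exists t0 : nat, l = a + t0%:Z by exists (absz (l - a)%R); lia.
have ht : (t0 < n.+1)%N by lia.
exists (fun j => (j == l : nat)) => lam x _.
by rewrite (prod_ind _ ht et) -scalemxAl mxE.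
Qed.

Lemma zclosed_iff (Z1 Z2 : fm -> Prop) : (forall x, Z1 x <-> Z2 x) ->
  zclosed a n Z1 -> zclosed a n Z2.
Proof.
move=> e [S [HS HZ]]; exists S; split => // x; rewrite -e; exact: HZ.
Qed.

Lemma zclosed_false : zclosed a n (fun _ : fm => False).
Proof.
exists (fun p => p = fun _ => 1); split.
  move=> p ->; split; first exact: pf_const.
  by exists (fun _ => 0%N) => lam x _; rewrite big1 ?mul1r // => t _; rewrite expr0.
by move=> x; split => // /(_ _ erefl) /eqP; rewrite oner_eq0.
Qed.

Lemma zclosed_or (Z1 Z2 : fm -> Prop) : zclosed a n Z1 -> zclosed a n Z2 ->
  zclosed a n (fun x => Z1 x \/ Z2 x).
Proof.
move=> [S1 [HS1 HZ1]] [S2 [HS2 HZ2]].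
exists (fun p => exists p1 p2, [/\ S1 p1, S2 p2 & p = fun x => p1 x * p2 x]); split.
  move=> p [p1 [p2 [s1 s2 ->]]].
  have [pf1 [e1 h1]] := HS1 _ s1; have [pf2 [e2 h2]] := HS2 _ s2.
  split; first exact: pf_mul.
  exists (fun j => (e1 j + e2 j)%N) => lam x hl.
  rewrite h1 // h2 // mulrACA -big_split /=.
  by congr (_ * _); apply: eq_bigr => t _; rewrite exprD.
move=> x; split.
  case=> [/HZ1 z1 | /HZ2 z2] p [p1 [p2 [s1 s2 ->]]].
    by rewrite (z1 p1 s1) mul0r.
  by rewrite (z2 p2 s2) mulr0.
move=> H; case: (classic (Z1 x)) => [|nz1]; [by left | right].
apply/HZ2 => p2 s2.
have [p1 [s1 np1]] : exists p1, S1 p1 /\ p1 x <> 0.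
  apply: NNPP => hn; apply: nz1; apply/HZ1 => p1 s1.
  by apply: NNPP => hp; apply: hn; exists p1.
have := H _ (ex_intro _ p1 (ex_intro _ p2 (And3 s1 s2 erefl))).
by move/eqP; rewrite mulf_eq0 => /orP [/eqP //|/eqP].
Qed.

Lemma zclosed_defect l : a <= l -> l < a + n%:Z -> zclosed a n (fun x : fm => defect x l).
Proof.
move=> al la.
have hl : inH a n l by rewrite /inH al ltW.
have hl1 : inH a n (l + 1) by rewrite /inH; apply/andP; split; lia.
exists (fun p => (exists c, p = fun x : fm => (x l *m U l) 0 c) \/
                 (exists c, p = fun x : fm => (x (l + 1) *m D l) 0 c)); split.
  move=> p [[c ->]|[c ->]]; split;
    by [apply: polyfun_coord | apply: mh_coord].
move=> x; split.
  by move=> /andP [/eqP h1 /eqP h2] p [[c ->]|[c ->]]; rewrite ?h1 ?h2 mxE.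
move=> H; apply/andP; split; apply/eqP/rowP => c.
  by rewrite (H (fun x : fm => (x l *m U l) 0 c)) ?mxE //; left; exists c.
by rewrite (H (fun x : fm => (x (l + 1) *m D l) 0 c)) ?mxE //; right; exists c.
Qed.

Definition Zdef (x : fm) : Prop := exists m : nat, (m < n)%N /\ defect x (a + m%:Z).

Lemma zclosed_Zdef : zclosed a n Zdef.
Proof.
suff H : forall N, (N <= n)%N ->
    zclosed a n (fun x : fm => exists m : nat, (m < N)%N /\ defect x (a + m%:Z)).
  exact: H.
elim=> [|N IH] hN.
  by apply: zclosed_iff zclosed_false => x; split => // [[m []]].
apply: zclosed_iff (zclosed_or (IH (ltnW hN)) (@zclosed_defect (a + N%:Z) _ _)).
- move=> x; split.
    case=> [[m [hm dm]]|dN]; first by exists m; split => //; apply: ltnW.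
    by exists N; split.
  move=> [m [hm dm]]; rewrite ltnS leq_eqVlt in hm.
  by case/orP: hm => [/eqP em|hm]; [right; rewrite -em | left; exists m].
- lia.
- lia.
Qed.

Lemma open_part : LPstar_open up down f a n.
Proof.
exists Zdef; split; first exact: zclosed_Zdef.
move=> w lp; split.
  by move=> ex [m [_ dm]]; move: (exact_def lp ex (a + m%:Z)); rewrite dm.
move=> nZ; apply: exact_nodef => // i; apply/negP => di.
have [ai ia] := defect_in lp di; apply: nZ.
exists (absz (i - a)%R); split; first lia.
by have -> : a + (absz (i - a)%R)%:Z = i by lia.
Qed.

Lemma deform (w : fm) i : lp_point up down f w -> defect w i ->
  exists u : fm, forall t : K, t != 0 ->
    lp_point up down f (fun j => w j + t *: u j) /\
    (forall l, defect (fun j => w j + t *: u j) l -> defect w l /\ l != i).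
Proof.
move=> lp /andP [/eqP wiU /eqP wiD].
pose P (l : int) (z : 'rV[K]_(d (l + 1))) (x : 'rV[K]_(d l)) : Prop :=
  if w l *m U l == 0 then x = 0 else
  (z *m D l = 0 -> exists c, w l *m U l = c *: w (l + 1) /\ x *m U l = c *: z /\ Q x).
have HP : forall l z, exists x, P l z x.
  move=> l z; rewrite /P; case: eqP => [_|nwu]; first by exists 0.
  case: (classic (z *m D l = 0)) => [zD|nzD]; last by exists 0.
  have [_ [s1 _]] := lp l; have [c ec] := line_scal s1.
  have czD : (c *: z) *m D l = 0 by rewrite -scalemxAl zD scaler0.
  have [x [xU Qx]] := lift czD.
  by exists x => _; exists c.
have [u0 [u0U Qu0]] := lift wiD.
have [g [gi gP]] := @fam_back K d i P u0 HP.
have inv : forall (N : nat) l, l + 1 + N%:Z = i -> Q (g (l + 1)).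
  elim=> [|N IH] l e.
    have e' : l + 1 = i by rewrite -e addr0.
    by rewrite e' gi.
  have e1 : l + 1 + 1 + N%:Z = i by rewrite -e; lia.
  have := gP (l + 1) ltac:(lia); rewrite /P; case: eqP => [_ ->|_]; first exact: Q0.
  by move/(_ (QS (IH _ e1))) => [c [_ [_ Q1]]].
have gD : forall l, l < i -> g (l + 1) *m D l = 0.
  by move=> l li; apply: QS; apply: (inv (absz (i - l - 1)%R)); lia.
pose u : fm := fun j => if i < j then 0 else g j.
have uR : forall j, i < j -> u j = 0 by move=> j ij; rewrite /u ij.
have uL : forall j, j <= i -> u j = g j by move=> j ji; rewrite /u ltNge ji.
exists u => t nt.
pose W : fm := fun j => w j + t *: u j.
have WR : forall j, i < j -> W j = w j by move=> j ij; rewrite /W uR // scaler0 addr0.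
have WiU : W i *m U i = t *: w (i + 1).
  by rewrite /W mulmxDl wiU add0r -scalemxAl uL // gi u0U.
have Wnz : forall j, W j != 0.
  move=> j; case: (ltP i j) => [ij|ji]; first by rewrite WR //; have [] := lp j.
  have [N eN] : exists N : nat, j + N%:Z = i by exists (absz (i - j)%R); lia.
  elim: N j eN {ji} => [|N IH] j eN.
    have -> : j = i by rewrite -eN addr0.
    apply/eqP => W0; move: WiU; rewrite W0 mul0mx => /esym /eqP.
    by rewrite scaler_eq0 (negPf nt) /=; have [/negPf ->] := lp (i+1).
  have ji : j < i by lia.
  have hj1 := IH (j + 1) ltac:(lia).
  have := gP j ji; rewrite /P; case: eqP => [_ gj0|nwu].
    by rewrite /W uL ?ltW // gj0 scaler0 addr0; have [] := lp j.
  move/(_ (gD j ji)) => [c [ec [gU _]]].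
  have nc : c != 0 by apply/eqP => c0; apply: nwu; rewrite ec c0 scale0r.
  apply/eqP => W0.
  have : W j *m U j = c *: W (j + 1).
    rewrite /W mulmxDl ec -scalemxAl (uL j) ?ltW // gU (uL (j + 1)); last by lia.
    by rewrite scalerDr !scalerA mulrC.
  by rewrite W0 mul0mx => /esym /eqP; rewrite scaler_eq0 (negPf nc) (negPf hj1).
have link : forall l, [/\ (W l *m U l <= W (l + 1)%R)%MS, (W (l + 1)%R *m D l <= W l)%MS
    & (defect W l -> defect w l /\ l != i)].
  move=> l; rewrite /defect; case: (ltgtP l i) => [li|il|->].
  - rewrite /W (uL l) ?ltW // (uL (l + 1)); last by lia.
    have [_ [s1 s2]] := lp l.
    have := gP l li; rewrite /P; case: eqP => [wu gl0|nwu].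
      rewrite gl0 scaler0 addr0 wu sub0mx mulmxDl -scalemxAl gD // scaler0 addr0.
      by split => // H; split => //; lia.
    move/(_ (gD l li)) => [c [ec [gU _]]].
    have nc : c != 0 by apply/eqP => c0; apply: nwu; rewrite ec c0 scale0r.
    have WU : (w l + t *: g l) *m U l = c *: (w (l + 1) + t *: g (l + 1)).
      by rewrite mulmxDl ec -scalemxAl gU scalerDr !scalerA mulrC.
    have [c' ec'] := line_scal (line_eq (introN eqP nwu) (proj1 (lp (l + 1))) s1).
    have wD : w (l + 1) *m D l = 0.
      by rewrite ec' -scalemxAl -mulmxA UD0 mulmx0 scaler0.
    split.
    + by rewrite WU scalemx_sub.
    + by rewrite mulmxDl wD -scalemxAl gD // scaler0 addr0 sub0mx.
    + move=> /andP [/eqP h _]; move: WU; rewrite h => /esym /eqP.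
      rewrite scaler_eq0 (negPf nc) /=.
      have := Wnz (l + 1); rewrite /W (uL (l + 1)); last by lia.
      by move/negPf => ->.
  - rewrite /W !uR //; last by lia.
    rewrite !scaler0 !addr0; have [_ [s1 s2]] := lp l.
    by split => // ->; split => //; lia.
  - split.
    + by rewrite WiU (WR (i + 1)) ?scalemx_sub //; lia.
    + by rewrite (WR (i + 1)) ?wiD ?sub0mx //; lia.
    + move=> /andP [/eqP h _]; move: WiU; rewrite h => /esym /eqP.
      by rewrite scaler_eq0 (negPf nt) /=; have [/negPf ->] := lp (i+1).
split.
  by move=> l; have [? ? _] := link l; split; first exact: Wnz.
by move=> l; have [_ _ ?] := link l.
Qed.
End Main.

Lemma count_lt (p1 p2 : pred nat) s m0 : (forall m, p2 m -> p1 m) -> m0 \in s ->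
  p1 m0 -> ~~ p2 m0 -> (count p2 s < count p1 s)%N.
Proof.
move=> sub; elim: s => // x s IH; rewrite inE => /orP [/eqP ->|ms] h1 h2 /=.
  by rewrite h1 (negPf h2) add0n add1n ltnS; apply: sub_count => m; exact: sub.
have hx : (p2 x <= p1 x)%N by case: (p2 x) (sub x) => // ->.
by rewrite -addnS; apply: leq_add => //; apply: IH.
Qed.

Section Dense.
Variables (k : fieldType) (d : int -> nat).
Variables (up : forall i : int, 'M[k]_(d i, d (i + 1)))
          (down : forall i : int, 'M[k]_(d (i + 1), d i)).
Hypothesis Hcol : colinked up down.
Hypothesis Hex : exact_rep up down.
Variables (a : int) (n : nat).
Hypothesis Hcs : cosupport up down (inH a n).
Variables (K : closedFieldType) (f : {rmorphism k -> K}).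

Lemma poly_line (w u : fam d K) p : polyfun a n p ->
  exists q : {poly K}, forall t, p (fun j => w j + t *: u j) = q.[t].
Proof.
elim => [c|i r _|p1 p2 _ [q1 h1] _ [q2 h2]|p1 p2 _ [q1 h1] _ [q2 h2]].
- by exists c%:P => t; rewrite hornerC.
- exists ((w i 0 r)%:P + 'X * (u i 0 r)%:P) => t.
  by rewrite !mxE !hornerE.
- by exists (q1 + q2) => t; rewrite hornerD h1 h2.
- by exists (q1 * q2) => t; rewrite hornerM h1 h2.
Qed.

Lemma poly_zero0 (q : {poly K}) : (forall t, t != 0 -> q.[t] = 0) -> q.[0] = 0.
Proof.
move=> H; apply/eqP; apply: contraT => nq.
have q0 : q != 0 by apply: contra nq => /eqP ->; rewrite horner0.
have : 'X * q != 0 by rewrite mulf_neq0 ?polyX_eq0.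
case/closed_nonrootP => t; rewrite /root hornerM hornerX => ht.
have nt : t != 0 by apply: contra ht => /eqP ->; rewrite mul0r.
by rewrite H // mulr0 eqxx in ht.
Qed.

Lemma dense_part : LPstar_dense up down f a n.
Proof.
move=> Z [S [HS HZ]] Hexz.
pose cnt (w : fam d K) := count (fun m : nat => defect up down f w (a + m%:Z)) (iota 0 n).
suff H : forall N w, lp_point up down f w -> (cnt w <= N)%N -> Z w.
  by move=> w lp; exact: (H _ w lp (leqnn _)).
elim=> [|N IH] w lp hN.
all: case: (classic (forall i, ~~ defect up down f w i)) => [nd|].
  1,3: by apply: Hexz => //; apply: exact_nodef.
all: move=> /not_all_ex_not [i /negP /negbNE di].
all: have [ai ia] := defect_in Hcs lp di.
all: have em : a + (absz (i - a)%R)%:Z = i by lia.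
all: have mi : absz (i - a)%R \in iota 0 n by rewrite mem_iota; lia.
  have : has (fun m : nat => defect up down f w (a + m%:Z)) (iota 0 n).
    by apply/hasP; exists (absz (i - a)%R) => //; rewrite em.
  by rewrite has_count; move: hN; rewrite /cnt; lia.
have [u Hu] := deform Hcol Hex lp di.
have Zt : forall t : K, t != 0 -> Z (fun j => w j + t *: u j).
  move=> t nt; have [lpt dt] := Hu t nt; apply: IH => //.
  rewrite -ltnS; apply: leq_trans hN.
  apply: (count_lt (m0 := absz (i - a)%R)) => //.
  - by move=> m /dt [].
  - by rewrite /= em.
  - by apply/negP; rewrite /= em => /dt []; rewrite eqxx.
apply/HZ => p sp.
have [q hq] := poly_line w u (HS p sp).1.
have : q.[0] = 0.
  by apply: poly_zero0 => t nt; rewrite -hq; exact: (proj1 (HZ _) (Zt t nt) p sp).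
rewrite -hq.
suff -> : (fun j => w j + 0 *: u j) = w by [].
by apply: functional_extensionality_dep => j; rewrite scale0r addr0.
Qed.
End Dense.

Theorem proposition3p10
  (k : fieldType) (d : int -> nat)
  (up : forall i : int, 'M[k]_(d i, d (i + 1)))
  (down : forall i : int, 'M[k]_(d (i + 1), d i)) :
  colinked up down -> exact_rep up down ->
  forall (a : int) (n : nat),
    cosupport up down (inH a n) ->
    forall (K : closedFieldType) (f : {rmorphism k -> K}),
      LPstar_open up down f a n /\ LPstar_dense up down f a n.
Proof.
move=> Hcol Hex a n Hcs K f; split.
  exact: (open_part Hcol f Hcs).
exact: dense_part.
Qed.
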